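(* Let $(E,d)$ be a Polish space and $\mu\in(0,1)$. For any $f\in D^{\mu}([0,1],E)$, \[ [f]_{\wedge\mu}\le[f]_{\mu}\le 2[f]_{\sim\mu}\le\frac{2}{1-2^{-\mu}}[f]_{\wedge\mu}. \]
   Context: $D([0,1],E)$ is the space of càdlàg $E$-valued functions on $[0,1]$. For $0\le s\le t\le u\le 1$, $\Delta(f;s,t,u)=d(f(s),f(t))\wedge d(f(t),f(u))$, and $[f]_\mu=\sup_{0\le s\le t\le u\le 1}\frac{\Delta(f;s,t,u)}{|u-s|^\mu}$. $D^{\mu}([0,1],E)$ is the set of $f\in D([0,1],E)$ with $[f]_\mu+\sup_{t\in(0,1]}\frac{d(f(0),f(t))}{t^\mu}+\sup_{t\in[0,1)}\frac{d(f(1),f(t))}{|1-t|^\mu}<\infty$. For $0\le\sigma<\tau\le1$, $N(f;(\sigma,\tau))=\inf_{\sigma<\theta\le\tau}\sup_{s\in[\sigma,\theta),\,u\in[\theta,\tau]}\left[d(f(\sigma),f(s))\vee d(f(u),f(\tau))\right]$; for $\eta>0$, $N(f;\eta)=\sup_{0\le\sigma<\tau\le 1,\ \tau-\sigma\le\eta}N(f;(\sigma,\tau))$; $[f]_{\sim\mu}=\sup_{\eta>0}\frac{N(f;\eta)}{\eta^\mu}$. Finally $[f]_{\wedge\mu}=\sup_{0<s<u\le 1}\frac{\Delta\left(f;s,\frac{s+u}{2},u\right)}{|u-s|^{\mu}}$. *)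

(* Defs.v *)
From HB Require Import structures.
From mathcomp Require Import all_boot all_order all_algebra.
From mathcomp Require Import all_classical all_reals all_analysis.
Set Implicit Arguments. Unset Strict Implicit. Unset Printing Implicit Defensive.
Import Order.TTheory GRing.Theory Num.Theory.
Local Open Scope classical_set_scope.
Local Open Scope ring_scope.

Section Defs.
Variables (R : realType) (E : Type) (d : E -> E -> R).

Definition is_metric : Prop :=
  [/\ forall x y, 0 <= d x y,
      forall x y, d x y = 0 <-> x = y,
      forall x y, d x y = d y x &
      forall x y z, d x z <= d x y + d y z].

Definition polish : Prop :=
  is_metric /\
  (forall u : nat -> E,
     (forall eps : R, 0 < eps -> exists N : nat, forall m n : nat,
        (N <= m)%N -> (N <= n)%N -> d (u m) (u n) < eps) ->
     exists x : E, forall eps : R, 0 < eps -> exists N : nat, forall n : nat,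
        (N <= n)%N -> d (u n) x < eps) /\
  (exists D : set E, countable D /\
     forall (x : E) (eps : R), 0 < eps -> exists2 y, D y & d x y < eps).

(* f : [0,1] -> E is càdlàg (values of f outside [0,1] are irrelevant) *)
Definition cadlag (f : R -> E) : Prop :=
  (forall t : R, 0 <= t < 1 -> forall eps : R, 0 < eps ->
     exists2 delta : R, 0 < delta &
       forall s : R, t <= s -> s < t + delta -> s <= 1 -> d (f s) (f t) < eps) /\
  (forall t : R, 0 < t <= 1 -> exists l : E, forall eps : R, 0 < eps ->
     exists2 delta : R, 0 < delta &
       forall s : R, 0 <= s -> t - delta < s -> s < t -> d (f s) l < eps).

Definition Delta (f : R -> E) (s t u : R) : R := Num.min (d (f s) (f t)) (d (f t) (f u)).

Local Open Scope ereal_scope.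

(* [f]_mu  (quotients with u = s have Delta = 0 and count as 0) *)
Definition holder_semi (mu : R) (f : R -> E) : \bar R :=
  ereal_sup [set x : \bar R | exists s t u : R,
     [/\ (0 <= s)%R, (s <= t)%R, (t <= u)%R, (u <= 1)%R &
         x = ((Delta f s t u / (u - s) `^ mu)%R)%:E]].

Definition endpoint0 (mu : R) (f : R -> E) : \bar R :=
  ereal_sup [set x : \bar R | exists t : R,
     [/\ (0 < t)%R, (t <= 1)%R & x = ((d (f 0%R) (f t) / t `^ mu)%R)%:E]].

Definition endpoint1 (mu : R) (f : R -> E) : \bar R :=
  ereal_sup [set x : \bar R | exists t : R,
     [/\ (0 <= t)%R, (t < 1)%R & x = ((d (f 1%R) (f t) / `|1 - t| `^ mu)%R)%:E]].

Definition in_Dmu (mu : R) (f : R -> E) : Prop :=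
  cadlag f /\ holder_semi mu f + endpoint0 mu f + endpoint1 mu f < +oo.

Definition Nint (f : R -> E) (sigma tau : R) : \bar R :=
  ereal_inf [set y : \bar R | exists theta : R,
     [/\ (sigma < theta)%R, (theta <= tau)%R &
     y = ereal_sup [set x : \bar R | exists s u : R,
           [/\ (sigma <= s)%R, (s < theta)%R, (theta <= u)%R, (u <= tau)%R &
               x = (Num.max (d (f sigma) (f s)) (d (f u) (f tau)))%:E]]]].

Definition Neta (f : R -> E) (eta : R) : \bar R :=
  ereal_sup [set x : \bar R | exists sigma tau : R,
     [/\ (0 <= sigma)%R, (sigma < tau)%R, (tau <= 1)%R, (tau - sigma <= eta)%R &
         x = Nint f sigma tau]].

Definition tilde_semi (mu : R) (f : R -> E) : \bar R :=
  ereal_sup [set x : \bar R | exists eta : R,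
     (0 < eta)%R /\ x = Neta f eta * ((eta `^ mu)^-1)%:E].

Definition wedge_semi (mu : R) (f : R -> E) : \bar R :=
  ereal_sup [set x : \bar R | exists s u : R,
     [/\ (0 < s)%R, (s < u)%R, (u <= 1)%R &
         x = ((Delta f s ((s + u) / 2) u / (u - s) `^ mu)%R)%:E]].

End Defs.

(* Main.v *)
Require Import Defs.
From HB Require Import structures.
From mathcomp Require Import all_boot all_order all_algebra.
From mathcomp Require Import all_classical all_reals all_analysis.
From mathcomp Require Import ring lra.
Import Order.TTheory GRing.Theory Num.Theory.
Local Open Scope classical_set_scope.
Local Open Scope ring_scope.

Lemma bern (R : realType) (h : R) (n : nat) : 0 <= h -> 1 + n%:R * h <= (1 + h) ^+ n.
Proof.
move=> h0; elim: n => [|n IH]; first by rewrite expr0 mul0r addr0.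
rewrite exprSr -addn1 natrD.
have hn : 0 <= n%:R * h by apply: mulr_ge0.
have : 0 <= (1 + h) ^+ n by apply: exprn_ge0; lra.
nra.
Qed.

Lemma geo_small (R : realType) (r : R) : 0 < r -> r < 1 ->
  forall e : R, 0 < e -> exists n : nat, r ^+ n < e.
Proof.
move=> r0 r1 e e0.
set q := r^-1.
have q1 : 1 < q by rewrite /q invf_gt1.
set h := q - 1.
have h0 : 0 < h by rewrite /h; lra.
set N := Num.Def.archi_bound ((e * h)^-1).
have hN : (e * h)^-1 < N%:R by apply: archi_boundP; rewrite invr_ge0; apply: mulr_ge0; lra.
exists N.
have B := @bern R h N (ltW h0).
have Eq : 1 + h = q by rewrite /h; lra.
rewrite Eq in B.
have rq : r ^+ N * q ^+ N = 1 by rewrite -exprMn /q mulfV ?expr1n // gt_eqF.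
have eh : 0 < e * h by apply: mulr_gt0.
have : 1 < N%:R * (e * h).
  by rewrite -ltr_pdivrMr // div1r.
have rN0 : 0 < r ^+ N by apply: exprn_gt0.
move=> H1.
have eY : 1 < e * q ^+ N by nra.
have : r ^+ N * 1 < r ^+ N * (e * q ^+ N) by rewrite ltr_pM2l.
rewrite mulr1 mulrCA rq mulr1 //.
Qed.


Lemma r_props (R : realType) (mu : R) : 0 < mu ->
  [/\ 0 < 2 `^ (- mu), 2 `^ (- mu) < 1 &
      forall l : R, 0 <= l -> (l / 2) `^ mu = 2 `^ (- mu) * l `^ mu].
Proof.
move=> mu0.
have q1 : 1 < (2:R) `^ mu.
  rewrite /powR ifF; last by apply/negbTE; rewrite pnatr_eq0.
  by rewrite expR_gt1 mulr_gt0 // ln_gt0 // ltr1n.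
split.
- by apply: powR_gt0.
- by rewrite powRN invf_lt1 //; lra.
- move=> l l0; rewrite powRM //.
  rewrite -powR_inv1 // -powRrM mulN1r mulrC //.
Qed.


Section Main.
Variables (R : realType) (E : Type) (d : E -> E -> R).
Hypothesis hm : is_metric d.
Variables (mu : R) (f : R -> E).
Hypothesis mu0 : 0 < mu.
Hypothesis hc : cadlag d f.
Variable w : R.
Hypothesis w0 : 0 <= w.
Hypothesis hw : (wedge_semi d mu f <= w%:E)%E.

Local Notation D x y := (d (f x) (f y)).

Lemma dge0 x y : 0 <= d x y. Proof. by case: hm. Qed.
Lemma dxx x : d x x = 0. Proof. by case: hm => _ h _ _; apply/h. Qed.
Lemma dC x y : d x y = d y x. Proof. by case: hm. Qed.
Lemma dtri x y z : d x z <= d x y + d y z. Proof. by case: hm. Qed.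

Definition r := 2 `^ (- mu).
Definition K := (1 - r)^-1.

Lemma r0 : 0 < r. Proof. by case: (@r_props _ _ mu0). Qed.
Lemma r1 : r < 1. Proof. by case: (@r_props _ _ mu0). Qed.
Lemma half l : 0 <= l -> (l / 2) `^ mu = r * l `^ mu.
Proof. by case: (@r_props _ _ mu0) => _ _; apply. Qed.
Lemma K0 : 0 < K. Proof. by rewrite /K invr_gt0; have := r1; lra. Qed.
Lemma Kr : K * r + 1 = K.
Proof.
have h : 1 - r != 0 by apply/eqP; have := r1; lra.
rewrite /K; field; exact: h.
Qed.

Lemma pge0 a b : 0 <= (b - a) `^ mu. Proof. exact: powR_ge0. Qed.

Lemma wf_pos a b : 0 < a -> a < b -> b <= 1 ->
  Num.min (D a ((a + b) / 2)) (D ((a + b) / 2) b) <= w * (b - a) `^ mu.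
Proof.
move=> a0 ab b1.
have p0 : 0 < (b - a) `^ mu by apply: powR_gt0; lra.
have H : ((Delta d f a ((a + b) / 2) b / (b - a) `^ mu)%:E <= wedge_semi d mu f)%E.
  by apply: ereal_sup_ubound; exists a, b; split.
have := le_trans H hw; rewrite lee_fin ler_pdivrMr //.
Qed.

Lemma wf a b : 0 <= a -> a < b -> b <= 1 ->
  Num.min (D a ((a + b) / 2)) (D ((a + b) / 2) b) <= w * (b - a) `^ mu.
Proof.
move=> a0 ab b1.
case: (ltP 0 a) => [apos|ale0]; first exact: wf_pos.
have a00 : a = 0 by apply/le_anti; rewrite ale0 a0.
subst a.
apply/ler_addgt0Pr => e e0.
have e20 : 0 < e / 2 by lra.
have [d0 d00 H0] := hc.1 0 (ltac:(apply/andP; split; lra)) (e / 2) e20.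
have [dm dm0 Hm] := hc.1 ((0 + b) / 2) (ltac:(apply/andP; split; lra)) (e / 2) e20.
set mn := Num.min (Num.min d0 dm) b.
have m1 : mn <= d0 by rewrite /mn !ge_min lexx.
have m2 : mn <= dm by rewrite /mn !ge_min lexx orbT.
have m3 : mn <= b by rewrite /mn !ge_min lexx orbT.
have m0 : 0 < mn by rewrite /mn !lt_min d00 dm0 ab.
set s := mn / 2.
set sm := (s + b) / 2.
have Ws := @wf_pos s b ltac:(rewrite /s; lra) ltac:(rewrite /s; lra) b1.
have pl : (b - s) `^ mu <= (b - 0) `^ mu.
  by apply: (ge0_ler_powR (ltW mu0)); rewrite ?nnegrE /s; lra.
have wpl : w * (b - s) `^ mu <= w * (b - 0) `^ mu by apply: ler_wpM2l.
have h1 : D s 0 < e / 2 by apply: H0; rewrite /s; lra.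
have h2 : D sm ((0 + b) / 2) < e / 2 by apply: Hm; rewrite /sm /s; lra.
have t1 := dtri (f 0) (f s) (f ((0 + b) / 2)).
have t2 := dtri (f s) (f sm) (f ((0 + b) / 2)).
have t3 := dtri (f ((0 + b) / 2)) (f sm) (f b).
rewrite (dC (f 0) (f s)) in t1.
rewrite (dC (f ((0 + b) / 2)) (f sm)) in t3.
move: Ws; rewrite -/sm ge_min => /orP[W|W]; rewrite ge_min; apply/orP;
  first [by left; lra | by right; lra].
Qed.


Definition P3 (c : R) := forall a x b, 0 <= a -> a <= x -> x <= b -> b <= 1 ->
  Num.min (D a x) (D x b) <= (K * w + c) * (b - a) `^ mu.

Definition P4 (c : R) := forall a s u b, 0 <= a -> a <= s -> s <= u -> u <= b -> b <= 1 ->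
  Num.min (D a s) (D u b) <= (K * w + c) * (b - a) `^ mu.

Lemma Kw0 : 0 <= K * w. Proof. by apply: mulr_ge0 => //; apply: ltW; apply: K0. Qed.

Lemma keyid c p : (K * w + c * r) * p = w * p + (K * w + c) * (r * p).
Proof.
have := Kr => h.
have -> : w * p + (K * w + c) * (r * p) = w * p * (K * r + 1) + c * r * p by ring.
by rewrite h; ring.
Qed.

Lemma step3 c : 0 <= c -> P3 c -> P3 (c * r).
Proof.
move=> c0 H a x b a0 ax xb b1.
have cr0 : 0 <= c * r by apply: mulr_ge0 => //; apply: ltW; apply: r0.
case: (ltP a b) => [ltab|leba].
2:{ have ea : a = b by apply/le_anti; rewrite leba andbT; apply: le_trans xb.
  have ex : x = a by apply/le_anti; rewrite ax andbT ea.
  subst; rewrite !dxx minxx; apply: mulr_ge0; last exact: pge0.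
  by apply: addr_ge0 => //; apply: Kw0. }
set m := (a + b) / 2.
have hp1 : (m - a) `^ mu = r * (b - a) `^ mu.
  by rewrite -half; [congr (_ `^ _); rewrite /m|]; lra.
have hp2 : (b - m) `^ mu = r * (b - a) `^ mu.
  by rewrite -half; [congr (_ `^ _); rewrite /m|]; lra.
have W := @wf a b a0 ltab b1.
rewrite -/m in W.
rewrite keyid.
have wp0 : 0 <= w * (b - a) `^ mu by apply: mulr_ge0 => //; exact: pge0.
have Y0 : 0 <= (K * w + c) * (r * (b - a) `^ mu).
  apply: mulr_ge0; first by apply: addr_ge0 => //; apply: Kw0.
  by apply: mulr_ge0; [apply: ltW; apply: r0| exact: pge0].
have t1 := dtri (f a) (f m) (f x).
have t2 := dtri (f x) (f m) (f b).
have sy := dC (f m) (f x).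
case: (lerP x m) => hxm.
- have := H a x m a0 ax hxm ltac:(rewrite /m; lra).
  rewrite hp1.
  move: W; rewrite ge_min => /orP[W|W]; rewrite ge_min => /orP[h|h];
  rewrite ge_min; apply/orP; first [by left; lra | by right; lra].
- have := H m x b ltac:(rewrite /m; lra) (ltW hxm) xb b1.
  rewrite hp2.
  move: W; rewrite ge_min => /orP[W|W]; rewrite ge_min => /orP[h|h];
  rewrite ge_min; apply/orP; first [by left; lra | by right; lra].
Qed.

Lemma step4 c : 0 <= c -> P3 0 -> P4 c -> P4 (c * r).
Proof.
move=> c0 H3 H a s u b a0 as_ su ub b1.
have cr0 : 0 <= c * r by apply: mulr_ge0 => //; apply: ltW; apply: r0.
case: (ltP a b) => [ltab|leba].
2:{ have ea : a = b by lra.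
  have es : s = a by lra.
  have eu : u = a by lra.
  subst; rewrite !dxx minxx; apply: mulr_ge0; last exact: pge0.
  by apply: addr_ge0 => //; apply: Kw0. }
set m := (a + b) / 2.
have hp1 : (m - a) `^ mu = r * (b - a) `^ mu.
  by rewrite -half; [congr (_ `^ _); rewrite /m|]; lra.
have hp2 : (b - m) `^ mu = r * (b - a) `^ mu.
  by rewrite -half; [congr (_ `^ _); rewrite /m|]; lra.
have W := @wf a b a0 ltab b1.
rewrite -/m in W.
rewrite keyid.
have wp0 : 0 <= w * (b - a) `^ mu by apply: mulr_ge0 => //; exact: pge0.
have rp0 : 0 <= r * (b - a) `^ mu by apply: mulr_ge0; [apply: ltW; apply: r0| exact: pge0].
have Y1 : (K * w + 0) * (r * (b - a) `^ mu) <= (K * w + c) * (r * (b - a) `^ mu).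
  by apply: ler_wpM2r => //; lra.
have Y0 : 0 <= (K * w + 0) * (r * (b - a) `^ mu).
  by apply: mulr_ge0 => //; rewrite addr0; apply: Kw0.
move: W; rewrite ge_min => /orP[W|W].
- have t1 := dtri (f a) (f m) (f s).
  have sy := dC (f m) (f s).
  case: (lerP s m) => hsm.
  + have := H3 a s m a0 as_ hsm ltac:(rewrite /m; lra).
    rewrite hp1 ge_min => /orP[h|h]; rewrite ge_min; apply/orP; left; lra.
  + have := H m s u b ltac:(rewrite /m; lra) (ltW hsm) su ub b1.
    rewrite hp2 ge_min => /orP[h|h]; rewrite ge_min; apply/orP;
    first [by left; lra | by right; lra].
- have t2 := dtri (f u) (f m) (f b).
  case: (lerP m u) => hmu.
  + have := H3 m u b ltac:(rewrite /m; lra) hmu ub b1.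
    rewrite hp2 ge_min (dC (f m) (f u)) => /orP[h|h]; rewrite ge_min; apply/orP; right; lra.
  + have := H a s u m a0 as_ su (ltW hmu) ltac:(rewrite /m; lra).
    rewrite hp1 ge_min => /orP[h|h]; rewrite ge_min; apply/orP;
    first [by left; lra | by right; lra].
Qed.

Lemma lim_real (v A B : R) : 0 <= B -> (forall n, v <= A + B * r ^+ n) -> v <= A.
Proof.
move=> B0 H; apply/ler_addgt0Pr => e e0.
have B1 : 0 < B + 1 by lra.
have [n hn] := @geo_small _ _ r0 r1 _ (divr_gt0 e0 B1).
rewrite ltr_pdivlMr // in hn.
have := H n.
have rn0 : 0 <= r ^+ n by apply: exprn_ge0; apply: ltW; apply: r0.
nra.
Qed.

Lemma lim3 c : 0 <= c -> (forall n, P3 (c * r ^+ n)) -> P3 0.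
Proof.
move=> c0 H a x b a0 ax xb b1.
apply: (@lim_real _ _ (c * (b - a) `^ mu)).
  by apply: mulr_ge0 => //; exact: pge0.
move=> n; have := H n a x b a0 ax xb b1.
move/le_trans; apply; rewrite le_eqVlt; apply/orP; left; apply/eqP; ring.
Qed.

Lemma lim4 c : 0 <= c -> (forall n, P4 (c * r ^+ n)) -> P4 0.
Proof.
move=> c0 H a s u b a0 as_ su ub b1.
apply: (@lim_real _ _ (c * (b - a) `^ mu)).
  by apply: mulr_ge0 => //; exact: pge0.
move=> n; have := H n a s u b a0 as_ su ub b1.
move/le_trans; apply; rewrite le_eqVlt; apply/orP; left; apply/eqP; ring.
Qed.

Lemma iter3 c : 0 <= c -> P3 c -> forall n, P3 (c * r ^+ n).
Proof.
move=> c0 H; elim=> [|n IH]; first by rewrite expr0 mulr1.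
rewrite exprSr mulrA; apply: step3 => //.
by apply: mulr_ge0 => //; apply: exprn_ge0; apply: ltW; apply: r0.
Qed.

Lemma iter4 c : 0 <= c -> P3 0 -> P4 c -> forall n, P4 (c * r ^+ n).
Proof.
move=> c0 H3 H; elim=> [|n IH]; first by rewrite expr0 mulr1.
rewrite exprSr mulrA; apply: step4 => //.
by apply: mulr_ge0 => //; apply: exprn_ge0; apply: ltW; apply: r0.
Qed.

Lemma base4 : P3 0 -> P4 (K * w).
Proof.
move=> H3 a s u b a0 as_ su ub b1.
have h1 := H3 a s b a0 as_ (le_trans su ub) b1.
have h2 := H3 a s u a0 as_ su (le_trans ub b1).
have pl : (u - a) `^ mu <= (b - a) `^ mu.
  by apply: (ge0_ler_powR (ltW mu0)); rewrite ?nnegrE; lra.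
have := Kw0 => kw.
have pl2 : (K * w + 0) * (u - a) `^ mu <= (K * w + 0) * (b - a) `^ mu.
  by apply: ler_wpM2l => //; rewrite addr0.
have X0 : 0 <= (K * w + 0) * (b - a) `^ mu by apply: mulr_ge0; [rewrite addr0|exact: pge0].
have eq2 : (K * w + K * w) * (b - a) `^ mu = 2 * ((K * w + 0) * (b - a) `^ mu) by ring.
rewrite eq2.
have t := dtri (f u) (f s) (f b).
rewrite (dC (f u) (f s)) in t.
move: h1 h2; rewrite !ge_min => /orP[h1|h1] /orP[h2|h2]; apply/orP;
  first [by left; lra | by right; lra].
Qed.

Variable H : R.
Hypothesis hH : holder_semi d mu f = H%:E.

Lemma H0 : 0 <= H.
Proof.
have : ((Delta d f 0 0 0 / (0 - 0) `^ mu)%:E <= holder_semi d mu f)%E.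
  by apply: ereal_sup_ubound; exists 0, 0, 0; split.
by rewrite hH lee_fin /Delta !dxx minxx mul0r.
Qed.

Lemma base3 : P3 H.
Proof.
move=> a x b a0 ax xb b1.
have kw := Kw0.
case: (ltP a b) => [ltab|leba].
2:{ have ea : a = b by lra.
  have ex : x = a by lra.
  subst; rewrite !dxx minxx; apply: mulr_ge0; last exact: pge0.
  by apply: addr_ge0 => //; apply: H0. }
have p0 : 0 < (b - a) `^ mu by apply: powR_gt0; lra.
have : ((Delta d f a x b / (b - a) `^ mu)%:E <= holder_semi d mu f)%E.
  by apply: ereal_sup_ubound; exists a, x, b; split.
rewrite hH lee_fin ler_pdivrMr // /Delta => h.
apply: (le_trans h); apply: ler_wpM2r; [exact: ltW | lra].
Qed.

Lemma four0 : P4 0.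
Proof.
have h3 : P3 0 := @lim3 H H0 (@iter3 H H0 base3).
exact: (@lim4 (K * w) Kw0 (@iter4 (K * w) Kw0 h3 (base4 h3))).
Qed.

Lemma Nint_bound sg ta : 0 <= sg -> sg < ta -> ta <= 1 ->
  (Nint d f sg ta <= (K * w * (ta - sg) `^ mu)%:E)%E.
Proof.
move=> s0 st t1.
have F := four0.
set C := K * w * (ta - sg) `^ mu.
have C0 : 0 <= C by apply: mulr_ge0; [exact: Kw0| exact: pge0].
apply/lee_addgt0Pr => e e0.
rewrite -EFinD.
set c' := C + e.
have c0 : 0 < c' by rewrite /c'; lra.
have key : exists2 th, sg < th <= ta & forall s u : R, sg <= s -> s < th -> th <= u -> u <= ta ->
    D sg s <= c' /\ D u ta <= c'.
  set S := [set s : R | sg <= s <= ta /\ c' < D sg s]%classic.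
  have FS : forall s' u, S s' -> s' <= u -> u <= ta -> D u ta <= C.
    move=> s' u [/andP[h1 h2] h3] h4 h5.
    have := F sg s' u ta s0 h1 h4 h5 t1.
    rewrite addr0 -/C ge_min => /orP[h|h] //.
    by rewrite /c' in h3; lra.
  have [Sne|Se] := pselect (S !=set0); last first.
    exists ta; first by apply/andP; split; lra.
    move=> s u h1 h2 h3 h4; split.
    - rewrite leNgt; apply/negP => h; apply: Se; exists s; split => //.
      by apply/andP; split; lra.
    - have -> : u = ta by lra.
      by rewrite dxx; lra.
  have lbS : has_lbound S by exists sg => s [/andP[h _] _].
  have [del del0 Hd] := hc.1 sg ltac:(apply/andP; split; lra) c' c0.
  have lb2 : lbound S (sg + del).
    move=> s [/andP[h1 h2] h3]; rewrite leNgt; apply/negP => h.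
    have := Hd s h1 h ltac:(lra); rewrite dC; lra.
  have thge : sg + del <= inf S by apply: lb_le_inf.
  have [s1 Ss1] := Sne.
  have thle : inf S <= ta.
    apply: (le_trans (ge_inf lbS Ss1)); by case: Ss1 => /andP[].
  exists (inf S); first by apply/andP; split; lra.
  move=> s u h1 h2 h3 h4; split.
  - rewrite leNgt; apply/negP => h.
    have : inf S <= s by apply: ge_inf => //; split => //; apply/andP; split; lra.
    lra.
  - case: (ltP (inf S) u) => hu.
    + have [s' Ss' s'u] := inf_lt Sne hu.
      have := FS s' u Ss' (ltW s'u) h4; rewrite /c'; lra.
    + have eu : u = inf S by lra.
      subst u.
      case: (ltP (inf S) ta) => hta; last first.
        have -> : inf S = ta by lra.
        by rewrite dxx; lra.
      have [del' del'0 Hd'] := hc.1 (inf S) ltac:(apply/andP; split; lra) e e0.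
      set v := Num.min (inf S + del' / 2) ta.
      have v1 : v <= inf S + del' / 2 by rewrite /v ge_min lexx.
      have v2 : v <= ta by rewrite /v ge_min lexx orbT.
      have v3 : inf S < v by rewrite /v lt_min hta andbT; lra.
      have Dv : D v ta <= C.
        have [s' Ss' s'v] := inf_lt Sne v3.
        exact: FS s' v Ss' (ltW s'v) v2.
      have Dt : D v (inf S) < e by apply: Hd'; lra.
      have t := dtri (f (inf S)) (f v) (f ta).
      rewrite dC in Dt.
      rewrite /c'; lra.
have [th /andP[th1 th2] Hth] := key.
apply: ge_ereal_inf.
exists (ereal_sup [set x : \bar R | exists s u : R,
           [/\ (sg <= s)%R, (s < th)%R, (th <= u)%R, (u <= ta)%R &
               x = (Num.max (d (f sg) (f s)) (d (f u) (f ta)))%:E]]).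
  by exists th; split.
apply: ge_ereal_sup => x [s [u [h1 h2 h3 h4 ->]]].
rewrite lee_fin ge_max; have [] := Hth s u h1 h2 h3 h4 => -> -> //.
Qed.

Lemma tilde_bound : (tilde_semi d mu f <= (K * w)%:E)%E.
Proof.
apply: ge_ereal_sup => x [eta [eta0 ->]].
have pe : 0 < eta `^ mu by apply: powR_gt0.
have N1 : (Neta d f eta <= (K * w * eta `^ mu)%:E)%E.
  apply: ge_ereal_sup => y [sg [ta [h1 h2 h3 h4 ->]]].
  have := @Nint_bound sg ta h1 h2 h3; move/le_trans; apply; rewrite lee_fin.
  apply: ler_wpM2l; first exact: Kw0.
  by apply: (ge0_ler_powR (ltW mu0)); rewrite ?nnegrE; lra.
have : (Neta d f eta * ((eta `^ mu)^-1)%:E <=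
       (K * w * eta `^ mu)%:E * ((eta `^ mu)^-1)%:E)%E.
  by apply: lee_wpmul2r => //; rewrite lee_fin invr_ge0; apply: ltW.
by rewrite -EFinM mulfK // gt_eqF.
Qed.

End Main.


Lemma sup_ge (R : realType) (S : set (\bar R)) (x y : \bar R) :
  S y -> (x <= y)%E -> (x <= ereal_sup S)%E.
Proof. by move=> Sy xy; apply: le_trans xy _; apply: ereal_sup_ubound. Qed.

Lemma holder_le_tilde (R : realType) (E : Type) (d : E -> E -> R) (hm : is_metric d)
  (mu : R) (mu0 : 0 < mu) (f : R -> E) :
  (0 <= tilde_semi d mu f)%E /\ (holder_semi d mu f <= tilde_semi d mu f)%E.
Proof.
have Nint_ge0 : forall sg ta, sg < ta -> (0 <= Nint d f sg ta)%E.
  move=> sg ta st; apply/ereal_infP => y [th [h1 h2 ->]].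
  apply: sup_ge.
    by exists sg, ta; split => //; lra.
  by rewrite lee_fin le_max dge0.
have Delta_le : forall s t u, s <= t -> t <= u -> s < u ->
    ((Delta d f s t u)%:E <= Nint d f s u)%E.
  move=> s t u st tu su; apply/ereal_infP => y [th [h1 h2 ->]].
  case: (ltP t th) => h.
  - apply: sup_ge.
      by exists t, u; split => //; lra.
    by rewrite lee_fin /Delta le_max ge_min lexx.
  - apply: sup_ge.
      by exists s, t; split => //; lra.
    by rewrite lee_fin /Delta le_max; apply/orP; right; rewrite ge_min lexx orbT.
have Neta_ge : forall sg ta eta, 0 <= sg -> sg < ta -> ta <= 1 -> ta - sg <= eta ->
    (Nint d f sg ta <= Neta d f eta)%E.
  move=> sg ta eta h1 h2 h3 h4; apply: ereal_sup_ubound.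
  by exists sg, ta; split.
have t0 : (0 <= tilde_semi d mu f)%E.
  apply: sup_ge.
    by exists 1; split => //; lra.
  rewrite powR1 /= invr1 mule1.
  have h1 : (Nint d f 0 1 <= Neta d f 1)%E by apply: Neta_ge; lra.
  have h2 : (0 <= Nint d f 0 1)%E by apply: Nint_ge0; lra.
  exact: le_trans h2 h1.
split => //.
apply: ge_ereal_sup => x [s [t [u [h1 h2 h3 h4 ->]]]].
case: (ltP s u) => su; last first.
  have -> : u - s = 0 by lra.
  by rewrite powR0 ?gt_eqF // invr0 mulr0.
have pe : 0 < (u - s) `^ mu by apply: powR_gt0; lra.
apply: sup_ge.
  by exists (u - s); split => //; lra.
rewrite EFinM.
apply: lee_wpmul2r; first by rewrite lee_fin invr_ge0; apply: ltW.
apply: le_trans (Delta_le s t u h2 h3 su) _.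
by apply: Neta_ge => //; lra.
Qed.

Theorem lemma2 (R : realType) (E : Type) (d : E -> E -> R)
  (hE : polish d) (mu : R) (hmu0 : 0 < mu) (hmu1 : mu < 1)
  (f : R -> E) (hf : in_Dmu d mu f) :
  (wedge_semi d mu f <= holder_semi d mu f)%E /\
  (holder_semi d mu f <= 2%:E * tilde_semi d mu f)%E /\
  (2%:E * tilde_semi d mu f <= (2 / (1 - 2 `^ (- mu)))%:E * wedge_semi d mu f)%E.
Proof.
have [hm _] := hE.
have hc := hf.1.
have [r0 r1 _] := @r_props R mu hmu0.
have [t0 ht] := @holder_le_tilde R E d hm mu hmu0 f.
split.
  apply: le_ereal_sup => x [s [u [h1 h2 h3 ->]]].
  by exists s, ((s + u) / 2), u; split => //; lra.
split.
  apply: le_trans ht _.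
  case: (tilde_semi d mu f) t0 => [t| |] //.
  - by rewrite -EFinM !lee_fin => t00; lra.
  - by move=> _; rewrite gt0_muley ?lte_fin.
have e0 : (-oo < endpoint0 d mu f)%E.
  apply: (lt_le_trans (ltNyr (d (f 0) (f 1) / 1 `^ mu))).
  by apply: ereal_sup_ubound; exists 1; split.
have e1 : (-oo < endpoint1 d mu f)%E.
  apply: (lt_le_trans (ltNyr (d (f 1) (f 0) / `|1 - 0| `^ mu))).
  by apply: ereal_sup_ubound; exists 0; split.
have hl : (-oo < holder_semi d mu f)%E.
  apply: (lt_le_trans (ltNyr (Delta d f 0 0 0 / (0 - 0) `^ mu))).
  by apply: ereal_sup_ubound; exists 0, 0, 0; split.
have [H hH] : exists H, holder_semi d mu f = H%:E.
  move: hf.2 hl; case: (holder_semi d mu f) => [H| |] //; first by exists H.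
  rewrite addye ?gt_eqF // addye ?gt_eqF //.
have wl : (0 <= wedge_semi d mu f)%E.
  apply: sup_ge.
    by exists (1/2), 1; split => //; lra.
  rewrite lee_fin; apply: divr_ge0; last exact: powR_ge0.
  by rewrite /Delta le_min !dge0.
have c0 : (0 < (2 / (1 - 2 `^ (- mu)))%:E)%E.
  by rewrite lte_fin; apply: divr_gt0 => //; lra.
case Hw: (wedge_semi d mu f) wl => [w| |] // wl.
- rewrite lee_fin in wl.
  have hw' : (wedge_semi d mu f <= w%:E)%E by rewrite Hw.
  have tb := @tilde_bound R E d hm mu f hmu0 hc w wl hw' H hH.
  apply: le_trans (lee_wpmul2l _ tb) _; first by rewrite lee_fin.
  rewrite -!EFinM lee_fin /K /r mulrA.
  by rewrite le_eqVlt; apply/orP; left; apply/eqP; congr (_ * _).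
- by rewrite gt0_muley // leey.
Qed.
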